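(* Let $p\ne3$ be a prime, $a\in\mathbb{Z}_p^*$ and $b,c\in\mathbb{Z}_p$. Then $Q_{a,b}(\mathbb{Z}_p)\cong Q_{a,c}(\mathbb{Z}_p)$.
   Context: Identify $\mathbb{Z}_p$ with $\{0,\dots,p-1\}$. The overflow indicator is $(x,y)_p=1$ if $x+y\ge p$ as integers and $0$ otherwise. $Q_{a,b}(\mathbb{Z}_p)$ is $\mathbb{Z}_p^3$ with multiplication $(x_1,x_2,x_3)(y_1,y_2,y_3)=(x_1+y_1+(x_2+y_2)x_3y_3+a(x_2,y_2)_p+b(x_3,y_3)_p,\ x_2+y_2,\ x_3+y_3)$. *)

(* Defs.v *)
(* Z_p is modelled by 'Z_p (for prime p, 'Z_p is 'I_p with
   arithmetic mod p); elements are identified with their representatives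
   0..p-1 via val. *)
From HB Require Import structures.
From mathcomp Require Import all_boot all_order all_algebra.
Set Implicit Arguments. Unset Strict Implicit. Unset Printing Implicit Defensive.
Import GRing.Theory.
Local Open Scope ring_scope.

Definition overflow (p : nat) (x y : 'Z_p) : nat :=
  if (p <= val x + val y)%N then 1%N else 0%N.

Definition Qcar (p : nat) := ('Z_p * 'Z_p * 'Z_p)%type.

Definition Qmul (p : nat) (a b : 'Z_p) (x y : Qcar p) : Qcar p :=
  let: (x1, x2, x3) := x in
  let: (y1, y2, y3) := y in
  (x1 + y1 + (x2 + y2) * x3 * y3 + a *+ overflow x2 y2 + b *+ overflow x3 y3,
   x2 + y2, x3 + y3).

Definition Q_isomorphic (p : nat) (a b a' c : 'Z_p) : Prop :=
  exists f : Qcar p -> Qcar p,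
    bijective f /\ forall x y, f (Qmul a b x y) = Qmul a' c (f x) (f y).

(* Main.v *)
Require Import Defs.
From HB Require Import structures.
From mathcomp Require Import all_boot all_order all_algebra.
From Stdlib Require Import Lia.
From mathcomp Require Import ssrAC.
Set Implicit Arguments. Unset Strict Implicit.
Import GRing.Theory.
Local Open Scope ring_scope.

Lemma modZ (p : nat) (hp : (1 < p)%N) m : (m %% (Zp_trunc p).+2 = m %% p)%N.
Proof. by rewrite Zp_cast. Qed.

Lemma ltZ (p : nat) (hp : (1 < p)%N) (x : 'Z_p) : (val x < p)%N.
Proof. by rewrite -[X in (_ < X)%N](Zp_cast hp) ltn_ord. Qed.

Lemma ovfE (p : nat) (hp : (1 < p)%N) (x y : 'Z_p) :
  (val (x + y)%R + p * overflow x y = val x + val y)%N.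
Proof.
have hx := ltZ hp x; have hy := ltZ hp y.
rewrite /overflow /= modZ //.
case: leqP => h.
- rewrite muln1 -{1}(subnK h) modnDr modn_small ?subnK //.
  rewrite ltn_subLR //; move/ltP: hx; move/ltP: hy => hx hy; apply/ltP; change (\val x) with (nat_of_ord x) in *; change (\val y) with (nat_of_ord y) in *; rewrite -!plusE; lia.
- by rewrite muln0 addn0 modn_small.
Qed.

Lemma valZ (p : nat) (hp : (1 < p)%N) (u t v : 'Z_p) :
  val (u + t * v)%R = ((val u + val t * val v) %% p)%N.
Proof. by rewrite /= !modZ // modnDmr. Qed.

Lemma key (p : nat) (hp : (1 < p)%N) (t x2 x3 y2 y3 : 'Z_p) :
  let h (u v : 'Z_p) := ((val u + val t * val v) %/ p)%N in
  (h (x2 + y2)%R (x3 + y3)%R + overflow x2 y2 + val t * overflow x3 y3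
   = h x2 x3 + h y2 y3 + overflow (x2 + t * x3)%R (y2 + t * y3)%R)%N.
Proof.
move=> h.
have p0 : (0 < p)%N by apply: ltnW.
have e2 := ovfE hp x2 y2; have e3 := ovfE hp x3 y3.
have el := ovfE hp (x2 + t * x3) (y2 + t * y3).
have ee: (x2 + t * x3 + (y2 + t * y3) = (x2 + y2) + t * (x3 + y3))%R.
  by rewrite mulrDr addrACA.
rewrite ee in el.
rewrite !valZ // in el.
have d1 := divn_eq (val x2 + val t * val x3) p.
have d2 := divn_eq (val y2 + val t * val y3) p.
have d3 := divn_eq (val (x2 + y2)%R + val t * val (x3 + y3)%R) p.
rewrite -/(h _ _) in d1 d2 d3 *.
apply/eqP; rewrite -(eqn_pmul2r p0); apply/eqP.
have e3' := congr1 (muln (val t)) e3.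
move: e2 e3' el d1 d2 d3; rewrite /h.
move: (val (x2 + y2)%R) (val (x3+y3)%R) (val x2) (val x3) (val y2) (val y3) (val t).
move: (overflow x2 y2) (overflow x3 y3) (overflow (x2 + t * x3)%R (y2 + t * y3)%R).
move=> o2 o3 ol a b x2' x3' y2' y3' T.
set q1 := (_ %/ p)%N; set q2 := (_ %/ p)%N; set q3 := (_ %/ p)%N.
set r1 := (_ %% p)%N; set r2 := (_ %% p)%N; set r3 := (_ %% p)%N.
rewrite -!plusE -!multE => *. nia.
Qed.

Lemma acL (V : zmodType) (x1 y1 M A2 D C s1 s2 N AH h1 h2 l : V) :
 AH + A2 + D = h1 + h2 + l ->
 x1 + y1 + M + A2 + (D + C) + (s1 + s2 + N + AH) =
 x1 + (s1 + h1) + (y1 + (s2 + h2)) + (M + N) + l + C.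
Proof.
move=> K; rewrite !addrA.
rewrite [LHS](@GRing.add V).[ACl (1*2*3*9*7*8*6*(10*4*5))] K.
by rewrite [RHS](@GRing.add V).[ACl (1*4*7*8*2*5*10*(3*6*9))].
Qed.

Lemma cube (R : comRingType) (u v : R) :
  (u+v)^+3 = u^+3 + v^+3 + 3%:R * (u*v*(u+v)).
Proof.
rewrite !exprS expr0 !mulr1 !mulrDl !mulrDr.
rewrite !mulrA ![v*u]mulrC !mul1r (mulrAC u u v) (mulrC (v*v) u) !mulrA.
set A := u*u*u; set B := v*v*v; set C := u*v*u; set D := u*v*v.
rewrite -!addrA; congr (_ + _).
rewrite !addrA (addrC _ B) -!addrA; congr (_ + _).
rewrite !addrA; congr (_ + _).
rewrite -!addrA; congr (_ + _).
by rewrite addrCA (addrC C D).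
Qed.

Unset Implicit Arguments.
Theorem corollary5p10 (p : nat) (hp : prime p) (hp3 : p != 3%N)
  (a b c : 'Z_p) (ha : a != 0) :
  Q_isomorphic a b a c.
Proof.
have hp1 : (1 < p)%N := prime_gt1 hp.
have ua : a \is a GRing.unit.
  rewrite -(natr_Zp a) unitZpE // prime_coprime //.
  apply/negP => /(dvdn_leq) h.
  have a0 : (0 < val a)%N.
    rewrite lt0n; apply/negP => /eqP e; apply/negP: ha; apply/negPn/eqP.
    by apply: val_inj.
  by move: (h a0); rewrite leqNgt ltZ.
have u3 : (3%:R : 'Z_p) \is a GRing.unit.
  by rewrite unitZpE // prime_coprime // dvdn_prime2.
pose t := a^-1 * (b - c).
pose s := (3%:R)^-1 * t.
pose h (u v : 'Z_p) := ((val u + val t * val v) %/ p)%N.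
pose phi (u v : 'Z_p) := s * v ^+ 3 + a *+ h u v.
pose f (x : Qcar p) : Qcar p := let: (x1, x2, x3) := x in (x1 + phi x2 x3, x2 + t * x3, x3).
pose g (x : Qcar p) : Qcar p := let: (y1, y2, y3) := x in
   (y1 - phi (y2 - t * y3) y3, y2 - t * y3, y3).
exists f; split.
  exists g.
    by case=> [[x1 x2] x3]; rewrite /f /g !addrK.
  by case=> [[x1 x2] x3]; rewrite /f /g !subrK.
case=> [[x1 x2] x3] [[y1 y2] y3].
rewrite /f /Qmul.
have e2 : x2 + y2 + t * (x3 + y3) = x2 + t * x3 + (y2 + t * y3).
  by rewrite mulrDr addrACA.
rewrite e2; congr (_, _, _).
have K : (h (x2 + y2)%R (x3 + y3)%R + overflow x2 y2 + val t * overflow x3 y3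
   = h x2 x3 + h y2 y3 + overflow (x2 + t * x3)%R (y2 + t * y3)%R)%N
  := key hp1 t x2 x3 y2 y3.
have K' := congr1 (fun n => a *+ n) K.
rewrite /= !mulrnDr mulrnA in K'.
have at3 : a *+ val t = b - c.
  by rewrite -mulr_natr natr_Zp /t mulrA mulrV // mul1r.
rewrite at3 in K'.
have eb : b *+ overflow x3 y3 = (b - c) *+ overflow x3 y3 + c *+ overflow x3 y3.
  by rewrite -mulrnDl subrK.
rewrite eb /phi cube.
have es : s * 3%:R = t by rewrite /s mulrAC mulVr // mul1r.
have eN : (x2 + t * x3 + (y2 + t * y3)) * x3 * y3
   = (x2 + y2) * x3 * y3 + s * (3%:R * (x3 * y3 * (x3 + y3))).
  rewrite -e2 [s * _]mulrA es !mulrDl; congr (_ + _).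
  by rewrite -!mulrA [(x3 + y3) * _]mulrC -!mulrA.
rewrite eN !mulrDr.
by apply: acL; rewrite K'.
Qed.
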